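(* Let $p\in\mathbb{D}\setminus\{0\}$ and let $\alpha_p(z)=\frac{p-z}{1-\overline{p}z}$. Consider $C_{\alpha_p}$ acting on $H^2(\mathbb{D})$ and its Hilbert space adjoint $C_{\alpha_p}^*$. Then: (i) for every $w=-\frac{p}{|p|}r$ with $0<r<1$, $$\frac{\|C_{\alpha_p}\kappa_w\|}{\|\kappa_w\|}\le\frac{\|C_{\alpha_p}^*\kappa_{-w}\|}{\|\kappa_{-w}\|};$$ (ii) for every $z\in\mathbb{D}$, $$\frac{\|C_{\alpha_p}^*\kappa_z\|}{\|\kappa_z\|}\le\frac{\|C_{\alpha_p}\kappa_{\alpha_p(z)}\|}{\|\kappa_{\alpha_p(z)}\|}.$$
   Context: $\mathbb{D}$ is the open unit disc; $H^2(\mathbb{D})$ is the Hardy space of holomorphic $f(z)=\sum a_nz^n$ with $\|f\|^2=\sum|a_n|^2<\infty$. For $w\in\mathbb{D}$, $\kappa_w(z)=\frac{1}{1-\overline{w}z}$ is the reproducing kernel of $H^2(\mathbb{D})$ at $w$, so $f(w)=\langle f,\kappa_w\rangle$ and $\|\kappa_w\|^2=(1-|w|^2)^{-1}$. $C_\varphi f=f\circ\varphi$. *)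

(* Defs.v *)
From Stdlib Require Import Reals ClassicalEpsilon.
From Coquelicot Require Import Coquelicot.
Open Scope R_scope.

(* A function f : C -> C is represented on the open unit disc by the
   Taylor coefficient sequence a:  f z = sum_n a_n z^n for |z| < 1. *)
Definition coeffs_of (f : C -> C) (a : nat -> C) : Prop :=
  forall z : C, Cmod z < 1 -> is_series (fun n => Cmult (a n) (pow_n z n)) (f z).

Definition inH2 (f : C -> C) : Prop :=
  exists a, coeffs_of f a /\ ex_series (fun n => (Cmod (a n)) ^ 2).

Definition H2coef (f : C -> C) : nat -> C :=
  epsilon (inhabits (fun _ : nat => RtoC 0)) (coeffs_of f).

Definition H2norm (f : C -> C) : R :=
  sqrt (Series (fun n => (Cmod (H2coef f n)) ^ 2)).

Definition H2inner (f g : C -> C) : C :=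
  let s := fun n => Cmult (H2coef f n) (Cconj (H2coef g n)) in
  (Series (fun n => fst (s n)), Series (fun n => snd (s n))).

Definition kernel (w : C) : C -> C :=
  fun z => Cdiv (RtoC 1) (Cminus (RtoC 1) (Cmult (Cconj w) z)).

Definition compop (phi : C -> C) (f : C -> C) : C -> C := fun z => f (phi z).

Definition alpha (p : C) (z : C) : C :=
  Cdiv (Cminus p z) (Cminus (RtoC 1) (Cmult (Cconj p) z)).

Definition is_H2_adjoint (T A : (C -> C) -> (C -> C)) : Prop :=
  forall g, inH2 g -> inH2 (A g) /\
    forall f, inH2 f -> H2inner (T f) g = H2inner f (A g).

(* Main.v *)
Require Import Defs.
From Stdlib Require Import Reals Lra Psatz FunctionalExtensionality ClassicalEpsilon.
From Coquelicot Require Import Coquelicot.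
Open Scope R_scope.


Lemma Cmod2 (z : C) : Cmod z ^ 2 = fst z ^ 2 + snd z ^ 2.
Proof. unfold Cmod. rewrite pow2_sqrt; [ring| nra]. Qed.

Lemma pow_n_C (z : C) n : pow_n z n = Cpow z n.
Proof. induction n; simpl; [reflexivity|]. rewrite IHn. reflexivity. Qed.

Lemma sum_n_fst (a : nat -> C) N : sum_n (fun n => fst (a n)) N = fst (sum_n a N).
Proof. induction N. rewrite !sum_O. reflexivity.
rewrite !sum_Sn, IHN. reflexivity. Qed.
Lemma sum_n_snd (a : nat -> C) N : sum_n (fun n => snd (a n)) N = snd (sum_n a N).
Proof. induction N. rewrite !sum_O. reflexivity.
rewrite !sum_Sn, IHN. reflexivity. Qed.

Lemma Rabs_fst_le (z : C) : Rabs (fst z) <= Cmod z.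
Proof. apply re_le_Cmod. Qed.
Lemma Rabs_snd_le (z : C) : Rabs (snd z) <= Cmod z.
Proof. unfold Cmod. rewrite <- sqrt_Rsqr_abs. apply sqrt_le_1_alt. unfold Rsqr. nra. Qed.

Lemma is_series_fst (a : nat -> C) (l : C) :
  is_series a l -> is_series (fun n => fst (a n)) (fst l).
Proof.
  unfold is_series. intros H.
  apply (filterlim_locally_ball_norm (K:=R_AbsRing)). intros eps.
  generalize (proj1 (filterlim_locally_ball_norm (K:=C_AbsRing) _ _) H eps).
  apply filter_imp. intros N HN. unfold ball_norm in *. rewrite sum_n_fst.
  eapply Rle_lt_trans; [|exact HN].
  change (Rabs (fst (sum_n a N) - fst l) <= Cmod (sum_n a N - l)%C).
  apply (Rabs_fst_le (sum_n a N - l)%C).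
Qed.

Lemma is_series_snd (a : nat -> C) (l : C) :
  is_series a l -> is_series (fun n => snd (a n)) (snd l).
Proof.
  unfold is_series. intros H.
  apply (filterlim_locally_ball_norm (K:=R_AbsRing)). intros eps.
  generalize (proj1 (filterlim_locally_ball_norm (K:=C_AbsRing) _ _) H eps).
  apply filter_imp. intros N HN. unfold ball_norm in *. rewrite sum_n_snd.
  eapply Rle_lt_trans; [|exact HN].
  change (Rabs (snd (sum_n a N) - snd l) <= Cmod (sum_n a N - l)%C).
  apply (Rabs_snd_le (sum_n a N - l)%C).
Qed.

Lemma pser_unique (e : nat -> R) :
  (forall x, Rabs x < 1 -> is_series (fun n => e n * x ^ n) 0) -> forall n, e n = 0.
Proof.
  intros H n.
  assert (Hr : Rbar_lt 0 (CV_radius e)).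
  { assert (Hs : ex_series (fun n => e n * (/2) ^ n)).
    { eexists. apply H. rewrite Rabs_pos_eq; lra. }
    apply ex_series_lim_0 in Hs.
    destruct (filterlim_bounded (K:=R_AbsRing) _ (ex_intro _ 0 Hs)) as [M HM].
    assert (Hle : Rbar_le (/2) (CV_radius e)).
    { apply (proj1 (CV_radius_bounded e)). exists M. intros k. apply HM. }
    destruct (CV_radius e); simpl in *; lra. }
  assert (HD := Derive_n_coef e n Hr).
  assert (H0 : Derive_n (PSeries e) n 0 = Derive_n (fun _ => 0) n 0).
  { apply Derive_n_ext_loc. exists (mkposreal 1 Rlt_0_1). intros t Ht.
    unfold PSeries. apply is_series_unique.
    apply (is_series_ext (fun n => e n * t ^ n)).
    { intros k. simpl. reflexivity. }
    apply H. change (Rabs (t - 0) < 1) in Ht. rewrite Rminus_0_r in Ht. exact Ht. }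
  assert (Hz : Derive_n (fun _ : R => 0) n 0 = 0).
  { destruct n; [reflexivity|]. exact (Derive_n_const n 0 0). }
  rewrite H0, Hz in HD.
  assert (Hf := INR_fact_neq_0 n).
  apply (Rmult_eq_reg_r (INR (Factorial.fact n))); [|exact Hf]. lra.
Qed.

Lemma Cpow_RtoC (x : R) n : Cpow (RtoC x) n = RtoC (x ^ n).
Proof. induction n; simpl. reflexivity. rewrite IHn. unfold Cmult, RtoC; simpl. f_equal; ring. Qed.

Lemma coeffs_unique f a b : coeffs_of f a -> coeffs_of f b -> a = b.
Proof.
  intros Ha Hb. apply functional_extensionality. intros n.
  assert (Hd : forall x, Rabs x < 1 ->
    is_series (fun n => Cmult (Cminus (a n) (b n)) (pow_n (RtoC x) n)) (RtoC 0)).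
  { intros x Hx.
    assert (Hz : Cmod (RtoC x) < 1) by (rewrite Cmod_R; exact Hx).
    pose proof (is_series_minus _ _ _ _ (Ha _ Hz) (Hb _ Hz)) as H.
    assert (E : @plus (NormedModule.AbelianMonoid C_AbsRing C_NormedModule) (f (RtoC x)) (@opp (NormedModule.AbelianGroup C_AbsRing C_NormedModule) (f (RtoC x))) = RtoC 0).
    { change (Cplus (f (RtoC x)) (Copp (f (RtoC x))) = RtoC 0). ring. }
    rewrite E in H. revert H.
    apply is_series_ext. intros k. change (Cplus (Cmult (a k) (pow_n (RtoC x) k)) (Copp (Cmult (b k) (pow_n (RtoC x) k))) = Cmult (Cminus (a k) (b k)) (pow_n (RtoC x) k)). ring. }
  assert (H1 : forall k, fst (Cminus (a k) (b k)) = 0).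
  { apply pser_unique. intros x Hx. generalize (is_series_fst _ _ (Hd x Hx)).
    apply is_series_ext. intros k. rewrite pow_n_C, Cpow_RtoC. simpl. ring. }
  assert (H2 : forall k, snd (Cminus (a k) (b k)) = 0).
  { apply pser_unique. intros x Hx. generalize (is_series_snd _ _ (Hd x Hx)).
    apply is_series_ext. intros k. rewrite pow_n_C, Cpow_RtoC. simpl. ring. }
  specialize (H1 n); specialize (H2 n).
  destruct (a n) as [a1 a2], (b n) as [b1 b2]. simpl in *. f_equal; lra.
Qed.

Lemma H2coef_eq f a : coeffs_of f a -> H2coef f = a.
Proof.
  intros Ha. unfold H2coef.
  apply (coeffs_unique f). 2: exact Ha.
  apply epsilon_spec. exists a. exact Ha.
Qed.

Lemma Cseries_bound (u : nat -> C) (l : C) (K r : R) :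
  0 <= r < 1 -> (forall n, Cmod (sum_n u n - l)%C <= K * r ^ n) -> is_series u l.
Proof.
  intros Hr HB. unfold is_series.
  apply (filterlim_locally_ball_norm (K:=C_AbsRing)). intros eps.
  destruct (Req_dec K 0) as [HK|HK].
  { exists 0%nat. intros n _. unfold ball_norm. 
    change (Cmod (sum_n u n - l)%C < eps). eapply Rle_lt_trans. apply HB. rewrite HK. destruct eps; simpl; lra. }
  assert (HKp : 0 < Rabs K) by (apply Rabs_pos_lt; exact HK).
  destruct (pow_lt_1_zero r ltac:(rewrite Rabs_pos_eq; lra) (eps / Rabs K)) as [N HN].
  { destruct eps; simpl. apply Rdiv_lt_0_compat; lra. }
  exists N. intros n Hn. unfold ball_norm.
  change (Cmod (sum_n u n - l)%C < eps). eapply Rle_lt_trans. apply HB.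
  specialize (HN n Hn). rewrite Rabs_pos_eq in HN by (apply pow_le; lra).
  apply (Rmult_lt_compat_l (Rabs K)) in HN; [|lra].
  replace (Rabs K * (eps / Rabs K)) with (pos eps) in HN by (field; lra).
  eapply Rle_lt_trans; [|exact HN]. apply Rmult_le_compat_r. apply pow_le; lra. apply Rle_abs.
Qed.

Lemma Cgeom (q : C) : Cmod q < 1 -> is_series (fun n => Cpow q n) (Cinv (Cminus (RtoC 1) q)).
Proof.
  intros Hq.
  assert (Hne : Cminus (RtoC 1) q <> RtoC 0).
  { intros E. assert (q = RtoC 1) by (apply (f_equal (fun t => Cminus (RtoC 1) t)) in E;
      replace q with (Cminus (RtoC 1) (Cminus (RtoC 1) q)) by ring; rewrite E; ring).
    subst q. rewrite Cmod_1 in Hq. lra. }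
  apply (Cseries_bound _ _ (/ Cmod (Cminus (RtoC 1) q) * Cmod q) (Cmod q)).
  { split; [apply Cmod_ge_0|exact Hq]. }
  intros n.
  assert (Hs : forall N, sum_n (fun n => Cpow q n) N = Cdiv (Cminus (RtoC 1) (Cpow q (S N))) (Cminus (RtoC 1) q)).
  { induction N. rewrite sum_O. simpl. field. exact Hne.
    rewrite sum_Sn, IHN. change (Cplus (Cdiv (Cminus (RtoC 1) (Cpow q (S N))) (Cminus (RtoC 1) q)) (Cpow q (S N)) = Cdiv (Cminus (RtoC 1) (Cpow q (S (S N)))) (Cminus (RtoC 1) q)).
    simpl. field. exact Hne. }
  rewrite Hs.
  replace (Cdiv (Cminus (RtoC 1) (Cpow q (S n))) (Cminus (RtoC 1) q) - Cinv (Cminus (RtoC 1) q))%C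
    with (Cdiv (Copp (Cpow q (S n))) (Cminus (RtoC 1) q)) by (field; exact Hne).
  rewrite Cmod_div by exact Hne. rewrite Cmod_opp, Cmod_pow. simpl. 
  right. unfold Rdiv. ring.
Qed.

Lemma Cmod_lt1_sq (w : C) : Cmod w < 1 -> Rabs (Cmod w ^ 2) < 1.
Proof. intros H. pose proof (Cmod_ge_0 w). rewrite Rabs_pos_eq by nra. nra. Qed.

Lemma kernel_coeffs w : Cmod w < 1 -> coeffs_of (kernel w) (fun n => Cpow (Cconj w) n).
Proof.
  intros Hw z Hz.
  assert (Hq : Cmod (Cmult (Cconj w) z) < 1).
  { rewrite Cmod_mult, Cmod_conj. pose proof (Cmod_ge_0 w); pose proof (Cmod_ge_0 z). nra. }
  pose proof (Cgeom _ Hq) as H.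
  unfold kernel. replace (Cdiv (RtoC 1) (Cminus (RtoC 1) (Cmult (Cconj w) z))) with
    (Cinv (Cminus (RtoC 1) (Cmult (Cconj w) z))) by (unfold Cdiv; ring).
  eapply is_series_ext; [|exact H]. intros n. simpl. rewrite Cpow_mult_l. f_equal; try (symmetry; apply pow_n_C).
Qed.

Lemma kernel_sq_series w : Cmod w < 1 ->
  is_series (fun n => Cmod (Cpow (Cconj w) n) ^ 2) (/ (1 - Cmod w ^ 2)).
Proof.
  intros Hw. apply (is_series_ext (fun n => (Cmod w ^ 2) ^ n)).
  { intros n. rewrite Cmod_pow, Cmod_conj. rewrite <- !pow_mult, Nat.mul_comm. reflexivity. }
  apply is_series_geom. apply Cmod_lt1_sq; exact Hw.
Qed.

Lemma kernel_inH2 w : Cmod w < 1 -> inH2 (kernel w).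
Proof.
  intros Hw. exists (fun n => Cpow (Cconj w) n). split. apply kernel_coeffs; exact Hw.
  eexists. apply kernel_sq_series; exact Hw.
Qed.

Lemma kernel_norm w : Cmod w < 1 -> H2norm (kernel w) = sqrt (/ (1 - Cmod w ^ 2)).
Proof.
  intros Hw. unfold H2norm. rewrite (H2coef_eq _ _ (kernel_coeffs w Hw)).
  f_equal. apply is_series_unique. apply kernel_sq_series; exact Hw.
Qed.


Lemma nz1 (a b : C) : Cmod a < 1 -> Cmod b < 1 -> Cminus (RtoC 1) (Cmult a b) <> RtoC 0.
Proof.
  intros Ha Hb E.
  assert (Cmult a b = RtoC 1).
  { replace (Cmult a b) with (Cminus (RtoC 1) (Cminus (RtoC 1) (Cmult a b))) by ring.
    rewrite E. ring. }
  apply (f_equal Cmod) in H. rewrite Cmod_mult, Cmod_1 in H.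
  pose proof (Cmod_ge_0 a); pose proof (Cmod_ge_0 b). nra.
Qed.

Lemma id1 (p z : C) : Cmod (Cminus (RtoC 1) (Cmult (Cconj p) z)) ^ 2 - Cmod (Cminus p z) ^ 2
  = (1 - Cmod p ^ 2) * (1 - Cmod z ^ 2).
Proof. rewrite !Cmod2. destruct p as [a b], z as [x y]. simpl. ring. Qed.

Lemma alpha_sq (p z : C) : Cmod p < 1 -> Cmod z < 1 ->
  Cmod (alpha p z) ^ 2 = Cmod (Cminus p z) ^ 2 / Cmod (Cminus (RtoC 1) (Cmult (Cconj p) z)) ^ 2.
Proof.
  intros Hp Hz. unfold alpha. rewrite Cmod_div.
  unfold Rdiv. rewrite Rpow_mult_distr, pow_inv. reflexivity.
  apply nz1; [rewrite Cmod_conj|]; assumption.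
Qed.

Lemma alpha_disc (p z : C) : Cmod p < 1 -> Cmod z < 1 -> Cmod (alpha p z) < 1.
Proof.
  intros Hp Hz.
  assert (Hsq : Cmod (alpha p z) ^ 2 < 1).
  { rewrite alpha_sq by assumption.
    pose proof (id1 p z).
    assert (HQ : 0 < Cmod (Cminus (RtoC 1) (Cmult (Cconj p) z)) ^ 2).
    { apply pow_lt. apply Cmod_gt_0. apply nz1; [rewrite Cmod_conj|]; assumption. }
    apply (Rmult_lt_reg_r (Cmod (Cminus (RtoC 1) (Cmult (Cconj p) z)) ^ 2)); [exact HQ|].
    unfold Rdiv. rewrite Rmult_assoc, Rinv_l by lra.
    pose proof (Cmod_ge_0 p); pose proof (Cmod_ge_0 z).
    assert (0 < (1 - Cmod p ^ 2) * (1 - Cmod z ^ 2)).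
    { apply Rmult_lt_0_compat; nra. }
    lra. }
  pose proof (Cmod_ge_0 (alpha p z)). nra.
Qed.


Lemma conj_alpha (p w : C) : Cminus (RtoC 1) (Cmult (Cconj p) w) <> RtoC 0 ->
  Cconj (alpha p w) = Cdiv (Cminus (Cconj p) (Cconj w)) (Cminus (RtoC 1) (Cmult p (Cconj w))).
Proof.
  intros H. unfold alpha. rewrite Cdiv_conj by exact H.
  rewrite !Cminus_conj, Cmult_conj, Cconj_conj. f_equal. f_equal.
  unfold Cconj, RtoC; simpl. f_equal; ring.
Qed.

Lemma compop_identity (p w z : C) : Cmod p < 1 -> Cmod w < 1 -> Cmod z < 1 ->
  kernel w (alpha p z) =
  Cplus (Cinv (Cminus (RtoC 1) (Cmult (Cconj w) p)))
   (Cmult (Cmult (Cmult (Cinv (Cminus (RtoC 1) (Cmult (Cconj w) p)))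
      (Cminus (Cconj (alpha p w)) (Cconj p))) z)
      (Cinv (Cminus (RtoC 1) (Cmult (Cconj (alpha p w)) z)))).
Proof.
  intros Hp Hw Hz.
  assert (HA : Cminus (RtoC 1) (Cmult (Cconj p) z) <> RtoC 0) by (apply nz1; [rewrite Cmod_conj|]; assumption).
  assert (HA' : Cminus (RtoC 1) (Cmult (Cconj p) w) <> RtoC 0) by (apply nz1; [rewrite Cmod_conj|]; assumption).
  assert (HB : Cminus (RtoC 1) (Cmult (Cconj w) p) <> RtoC 0) by (apply nz1; [rewrite Cmod_conj|]; assumption).
  assert (HB' : Cminus (RtoC 1) (Cmult p (Cconj w)) <> RtoC 0) by (apply nz1; [|rewrite Cmod_conj]; assumption).
  assert (HD : Cminus (RtoC 1) (Cmult (Cconj (alpha p w)) z) <> RtoC 0)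
    by (apply nz1; [rewrite Cmod_conj; apply alpha_disc|]; assumption).
  assert (HE : Cminus (RtoC 1) (Cmult (Cconj w) (alpha p z)) <> RtoC 0)
    by (apply nz1; [rewrite Cmod_conj|apply alpha_disc]; assumption).
  rewrite conj_alpha in HD |- * by exact HA'.
  unfold kernel, alpha in *.
  assert (HD2 : Cminus (Cminus (RtoC 1) (Cmult p (Cconj w))) (Cmult (Cminus (Cconj p) (Cconj w)) z) <> RtoC 0).
  { intros Eq. apply HD.
    replace (Cminus (RtoC 1) (Cmult (Cdiv (Cminus (Cconj p) (Cconj w)) (Cminus (RtoC 1) (Cmult p (Cconj w)))) z))
      with (Cdiv (Cminus (Cminus (RtoC 1) (Cmult p (Cconj w))) (Cmult (Cminus (Cconj p) (Cconj w)) z)) (Cminus (RtoC 1) (Cmult p (Cconj w)))) by (field; exact HB').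
    rewrite Eq. unfold Cdiv. ring. }
  field. repeat split; assumption.
Qed.

Definition cb (p w : C) (n : nat) : C :=
  match n with
  | O => Cinv (Cminus (RtoC 1) (Cmult (Cconj w) p))
  | S m => Cmult (Cmult (Cinv (Cminus (RtoC 1) (Cmult (Cconj w) p)))
                  (Cminus (Cconj (alpha p w)) (Cconj p))) (Cpow (Cconj (alpha p w)) m)
  end.

Lemma compop_coeffs (p w : C) : Cmod p < 1 -> Cmod w < 1 ->
  coeffs_of (compop (alpha p) (kernel w)) (cb p w).
Proof.
  intros Hp Hw z Hz. unfold compop. rewrite compop_identity by assumption.
  set (lam := Cinv (Cminus (RtoC 1) (Cmult (Cconj w) p))).
  set (c := Cconj (alpha p w)).
  assert (Hc : Cmod (Cmult c z) < 1).
  { unfold c. rewrite Cmod_mult, Cmod_conj. pose proof (alpha_disc p w Hp Hw).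
    pose proof (Cmod_ge_0 (alpha p w)); pose proof (Cmod_ge_0 z). nra. }
  pose proof (is_series_scal_l (Cmult (Cmult lam (Cminus c (Cconj p))) z) _ _ (Cgeom _ Hc)) as H.
  apply is_series_decr_1.
  eapply is_series_ext; [|refine (eq_ind _ (fun l => is_series _ l) H _ _)].
  - intros n. change (Cmult (Cmult (Cmult lam (Cminus c (Cconj p))) z) (Cpow (Cmult c z) n)
      = Cmult (cb p w (S n)) (pow_n z (S n))).
    simpl. fold lam c. change (mult z (pow_n z n)) with (Cmult z (pow_n z n)). replace (pow_n z n) with (Cpow z n) by (symmetry; apply pow_n_C). rewrite Cpow_mult_l. ring.
  - change (Cmult (Cmult (Cmult lam (Cminus c (Cconj p))) z) (Cinv (Cminus (RtoC 1) (Cmult c z)))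
      = Cplus (Cplus lam (Cmult (Cmult (Cmult lam (Cminus c (Cconj p))) z) (Cinv (Cminus (RtoC 1) (Cmult c z)))))
         (Copp (Cmult (cb p w 0) (pow_n z 0)))).
    simpl. fold lam. change (one : C_Ring) with (RtoC 1). ring.
Qed.

Lemma compop_sq_series (p w : C) : Cmod p < 1 -> Cmod w < 1 ->
  let lam := Cinv (Cminus (RtoC 1) (Cmult (Cconj w) p)) in
  let c := alpha p w in
  is_series (fun n => Cmod (cb p w n) ^ 2)
    (Cmod lam ^ 2 + (Cmod lam * Cmod (Cminus (Cconj c) (Cconj p))) ^ 2 * / (1 - Cmod c ^ 2)).
Proof.
  intros Hp Hw lam c.
  assert (Hc := Cmod_lt1_sq _ (alpha_disc p w Hp Hw)). fold c in Hc.
  pose proof (is_series_scal_l ((Cmod lam * Cmod (Cminus (Cconj c) (Cconj p))) ^ 2) _ _ (is_series_geom _ Hc)) as H.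
  apply is_series_decr_1.
  eapply is_series_ext; [|refine (eq_ind _ (fun l => is_series _ l) H _ _)].
  - intros n. change (((Cmod lam * Cmod (Cminus (Cconj c) (Cconj p))) ^ 2) * (Cmod c ^ 2) ^ n = Cmod (cb p w (S n)) ^ 2).
    simpl. fold lam c. rewrite !Cmod_mult, Cmod_pow, Cmod_conj, !Rmult_1_r, Rpow_mult_distr. ring.
  - change (((Cmod lam * Cmod (Cminus (Cconj c) (Cconj p))) ^ 2) * / (1 - Cmod c ^ 2) =
      (Cmod lam ^ 2 + (Cmod lam * Cmod (Cminus (Cconj c) (Cconj p))) ^ 2 * / (1 - Cmod c ^ 2)) + - Cmod (cb p w 0) ^ 2).
    simpl. fold lam. ring.
Qed.

Lemma compop_norm (p w : C) : Cmod p < 1 -> Cmod w < 1 ->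
  H2norm (compop (alpha p) (kernel w)) =
  sqrt ((1 - Cmod w ^ 2 * Cmod p ^ 2) /
        (Cmod (Cminus (RtoC 1) (Cmult (Cconj p) w)) ^ 2 * (1 - Cmod w ^ 2))).
Proof.
  intros Hp Hw. unfold H2norm. rewrite (H2coef_eq _ _ (compop_coeffs p w Hp Hw)).
  f_equal. rewrite (is_series_unique _ _ (compop_sq_series p w Hp Hw)).
  assert (HA' : Cminus (RtoC 1) (Cmult (Cconj p) w) <> RtoC 0) by (apply nz1; [rewrite Cmod_conj|]; assumption).
  assert (HB : Cminus (RtoC 1) (Cmult (Cconj w) p) <> RtoC 0) by (apply nz1; [rewrite Cmod_conj|]; assumption).
  set (Q := Cmod (Cminus (RtoC 1) (Cmult (Cconj p) w)) ^ 2).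
  set (M := Cmod (Cminus p w) ^ 2).
  set (P := Cmod p ^ 2). set (W := Cmod w ^ 2).
  assert (HQ : 0 < Q) by (apply pow_lt; apply Cmod_gt_0; exact HA').
  assert (HQM : Q - M = (1 - P) * (1 - W)) by apply id1.
  assert (H1 : Cmod (Cinv (Cminus (RtoC 1) (Cmult (Cconj w) p))) ^ 2 = / Q).
  { rewrite Cmod_inv by exact HB. rewrite pow_inv. f_equal. unfold Q. rewrite !Cmod2.
    destruct p as [a b], w as [x y]. simpl. ring. }
  assert (H2 : Cmod (alpha p w) ^ 2 = M / Q) by (apply alpha_sq; assumption).
  assert (H3 : Cmod (Cminus (Cconj (alpha p w)) (Cconj p)) ^ 2 = W * (1 - P) ^ 2 / Q).
  { rewrite <- Cminus_conj, Cmod_conj.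
    replace (Cminus (alpha p w) p) with
      (Cdiv (Cmult (Copp w) (Cminus (RtoC 1) (Cmult p (Cconj p)))) (Cminus (RtoC 1) (Cmult (Cconj p) w)))
      by (unfold alpha; field; exact HA').
    rewrite Cmod_div by exact HA'. unfold Rdiv. rewrite Rpow_mult_distr, pow_inv. fold Q.
    f_equal. unfold W, P. rewrite Cmod_mult, Rpow_mult_distr, Cmod_opp. f_equal.
    rewrite !Cmod2. destruct p as [a b]. simpl. ring. }
  rewrite Rpow_mult_distr, H1, H2, H3.
  pose proof (Cmod_ge_0 p); pose proof (Cmod_ge_0 w).
  assert (HP : P < 1) by (unfold P; nra). assert (HW : W < 1) by (unfold W; nra).
  replace M with (Q - (1 - P) * (1 - W)) by lra.
  assert (HPW : 0 < (1 - P) * (1 - W)) by (apply Rmult_lt_0_compat; lra). field. repeat split; lra.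
Qed.


Lemma Series_fst_of (t : nat -> C) (l : C) : is_series t l -> Series (fun n => fst (t n)) = fst l.
Proof. intros H. apply is_series_unique. apply is_series_fst; exact H. Qed.
Lemma Series_snd_of (t : nat -> C) (l : C) : is_series t l -> Series (fun n => snd (t n)) = snd l.
Proof. intros H. apply is_series_unique. apply is_series_snd; exact H. Qed.

Lemma Cstar_kernel (p : C) (Cstar : (C -> C) -> (C -> C)) :
  Cmod p < 1 -> is_H2_adjoint (compop (alpha p)) Cstar ->
  forall z, Cmod z < 1 -> H2norm (Cstar (kernel z)) = H2norm (kernel (alpha p z)).
Proof.
  intros Hp HC z Hz.
  destruct (HC (kernel z) (kernel_inH2 z Hz)) as [[b [Hb _]] Hadj].
  assert (Hval : forall u, Cmod u < 1 -> Cstar (kernel z) u = kernel (alpha p z) u).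
  { intros u Hu. specialize (Hadj (kernel u) (kernel_inH2 u Hu)).
    unfold H2inner in Hadj.
    rewrite (H2coef_eq _ _ (compop_coeffs p u Hp Hu)), (H2coef_eq _ _ (kernel_coeffs z Hz)),
      (H2coef_eq _ _ (kernel_coeffs u Hu)), (H2coef_eq _ _ Hb) in Hadj.
    assert (Hl : is_series (fun n => Cmult (cb p u n) (Cconj (Cpow (Cconj z) n))) (compop (alpha p) (kernel u) z)).
    { eapply is_series_ext; [|exact (compop_coeffs p u Hp Hu z Hz)].
      intros n. rewrite Cpow_conj, Cconj_conj. f_equal; try (symmetry; apply pow_n_C). }
    assert (Hr : is_series (fun n => Cmult (b n) (pow_n u n)) (Cstar (kernel z) u)) by (apply Hb; exact Hu).
    rewrite (Series_fst_of _ _ Hl), (Series_snd_of _ _ Hl) in Hadj.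
    assert (E1 : Series (fun n => fst (Cmult (Cpow (Cconj u) n) (Cconj (b n)))) = fst (Cstar (kernel z) u)).
    { rewrite <- (Series_fst_of _ _ Hr). apply Series_ext. intros n.
      replace (pow_n u n) with (Cpow u n) by (symmetry; apply pow_n_C). destruct (b n) as [b1 b2]. rewrite <- Cpow_conj.
      destruct (Cpow u n) as [v1 v2]. simpl. ring. }
    assert (E2 : Series (fun n => snd (Cmult (Cpow (Cconj u) n) (Cconj (b n)))) = - snd (Cstar (kernel z) u)).
    { rewrite <- (Series_snd_of _ _ Hr), <- Series_opp. apply Series_ext. intros n.
      replace (pow_n u n) with (Cpow u n) by (symmetry; apply pow_n_C). destruct (b n) as [b1 b2]. rewrite <- Cpow_conj.
      destruct (Cpow u n) as [v1 v2]. simpl. ring. }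
    rewrite E1, E2 in Hadj.
    assert (Hc : Cstar (kernel z) u = Cconj (compop (alpha p) (kernel u) z)).
    { revert Hadj. generalize (compop (alpha p) (kernel u) z) (Cstar (kernel z) u).
      intros [v1 v2] [a1 a2] H. simpl in H. injection H. intros. unfold Cconj; simpl. f_equal; lra. }
    rewrite Hc. unfold compop, kernel.
    assert (Hv := alpha_disc p z Hp Hz).
    rewrite Cdiv_conj by (apply nz1; [rewrite Cmod_conj|]; assumption).
    rewrite Cminus_conj, Cmult_conj, Cconj_conj.
    replace (Cconj (RtoC 1)) with (RtoC 1) by (unfold Cconj, RtoC; simpl; f_equal; ring).
    f_equal. f_equal. apply Cmult_comm. }
  assert (Hco : coeffs_of (Cstar (kernel z)) (fun n => Cpow (Cconj (alpha p z)) n)).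
  { intros u Hu. rewrite Hval by exact Hu. apply kernel_coeffs; [apply alpha_disc|]; assumption. }
  unfold H2norm. rewrite (H2coef_eq _ _ Hco), (H2coef_eq _ _ (kernel_coeffs _ (alpha_disc p z Hp Hz))).
  reflexivity.
Qed.


Lemma sqrt_ratio_le a b c d : 0 < b -> 0 < d -> a / b <= c / d ->
  sqrt a / sqrt b <= sqrt c / sqrt d.
Proof. intros Hb Hd H. rewrite <- !sqrt_div_alt by assumption. apply sqrt_le_1_alt. exact H. Qed.

Lemma part2 (p z : C) : Cmod p < 1 -> Cmod z < 1 ->
  sqrt (/ (1 - Cmod (alpha p z) ^ 2)) / sqrt (/ (1 - Cmod z ^ 2)) <=
  sqrt ((1 - Cmod (alpha p z) ^ 2 * Cmod p ^ 2) /
        (Cmod (Cminus (RtoC 1) (Cmult (Cconj p) (alpha p z))) ^ 2 * (1 - Cmod (alpha p z) ^ 2)))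
  / sqrt (/ (1 - Cmod (alpha p z) ^ 2)).
Proof.
  intros Hp Hz.
  assert (HA : Cminus (RtoC 1) (Cmult (Cconj p) z) <> RtoC 0) by (apply nz1; [rewrite Cmod_conj|]; assumption).
  set (Q := Cmod (Cminus (RtoC 1) (Cmult (Cconj p) z)) ^ 2).
  set (M := Cmod (Cminus p z) ^ 2).
  set (P := Cmod p ^ 2). set (Z := Cmod z ^ 2).
  assert (HQ : 0 < Q) by (apply pow_lt; apply Cmod_gt_0; exact HA).
  assert (HQM : Q - M = (1 - P) * (1 - Z)) by apply id1.
  assert (HV : Cmod (alpha p z) ^ 2 = M / Q) by (apply alpha_sq; assumption).
  assert (HQv : Cmod (Cminus (RtoC 1) (Cmult (Cconj p) (alpha p z))) ^ 2 = (1 - P) ^ 2 / Q).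
  { replace (Cminus (RtoC 1) (Cmult (Cconj p) (alpha p z))) with
      (Cdiv (Cminus (RtoC 1) (Cmult (Cconj p) p)) (Cminus (RtoC 1) (Cmult (Cconj p) z)))
      by (unfold alpha; field; exact HA).
    rewrite Cmod_div by exact HA. unfold Rdiv. rewrite Rpow_mult_distr, pow_inv. fold Q.
    f_equal. unfold P. rewrite !Cmod2. destruct p as [a b]. simpl. ring. }
  rewrite HV, HQv.
  pose proof (Cmod_ge_0 p); pose proof (Cmod_ge_0 z).
  assert (HP : 0 <= P < 1) by (unfold P; split; nra). assert (HZ : 0 <= Z < 1) by (unfold Z; split; nra).
  assert (HPZ : 0 < (1 - P) * (1 - Z)) by (apply Rmult_lt_0_compat; lra).
  assert (HM : 0 <= M) by (unfold M; apply pow2_ge_0).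
  assert (H1V : 0 < 1 - M / Q).
  { replace (1 - M / Q) with ((Q - M) / Q) by (field; lra). rewrite HQM. apply Rdiv_lt_0_compat; lra. }
  apply sqrt_ratio_le.
  - apply Rinv_0_lt_compat. lra.
  - apply Rinv_0_lt_compat. exact H1V.
  - replace (/ (1 - M / Q) / / (1 - Z)) with (Q / (1 - P)).
    2:{ replace M with (Q - (1 - P) * (1 - Z)) by lra. field. repeat split; lra. }
    replace ((1 - M / Q * P) / ((1 - P) ^ 2 / Q * (1 - M / Q)) / / (1 - M / Q))
      with ((Q - P * M) / (1 - P) ^ 2).
    2:{ field. repeat split; lra. }
    replace (Q / (1 - P)) with (Q * (1 - P) / (1 - P) ^ 2) by (field; lra).
    unfold Rdiv. apply Rmult_le_compat_r.
    { apply Rlt_le, Rinv_0_lt_compat. nra. }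
    assert (M <= Q) by nra. nra.
Qed.

Lemma part1 (p : C) (r : R) : p <> RtoC 0 -> Cmod p < 1 -> 0 < r < 1 ->
  let w := Copp (Cmult (Cdiv p (RtoC (Cmod p))) (RtoC r)) in
  sqrt ((1 - Cmod w ^ 2 * Cmod p ^ 2) /
        (Cmod (Cminus (RtoC 1) (Cmult (Cconj p) w)) ^ 2 * (1 - Cmod w ^ 2)))
   / sqrt (/ (1 - Cmod w ^ 2))
  <= sqrt (/ (1 - Cmod (alpha p (Copp w)) ^ 2)) / sqrt (/ (1 - Cmod (Copp w) ^ 2)).
Proof.
  intros Hp0 Hp Hr w.
  set (s := Cmod p).
  assert (Hs : 0 < s) by (apply Cmod_gt_0; exact Hp0).
  assert (Hs2 : s ^ 2 = fst p ^ 2 + snd p ^ 2) by (unfold s; apply Cmod2).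
  assert (Hw : Cmod w = r).
  { unfold w. rewrite Cmod_opp, Cmod_mult, Cmod_div, !Cmod_R. fold s.
    rewrite !Rabs_pos_eq by lra. field. all: try (apply Rgt_not_eq; exact Hs).
    intros E. apply (f_equal fst) in E. simpl in E. apply (Rgt_not_eq _ _ Hs). exact E. }
  assert (Hpw : Cmult (Cconj p) w = RtoC (- (s * r))).
  { unfold w. fold s. clearbody s. destruct p as [a b]. simpl in Hs2. unfold Cdiv, Cinv, Cconj, Cmult, Copp, RtoC; simpl.
    f_equal.
    - field_simplify; [|lra]. 
      replace (- a ^ 2 * s * r - s * b ^ 2 * r) with (- (s * r) * (a * (a * 1) + b * (b * 1))) by ring.
      rewrite <- Hs2. field. lra.
    - field. lra. }
  assert (Hsl : s < 1) by exact Hp.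
  assert (Hpu : Cmult (Cconj p) (Copp w) = RtoC (s * r)).
  { replace (Cmult (Cconj p) (Copp w)) with (Copp (Cmult (Cconj p) w)) by ring.
    rewrite Hpw. unfold Copp, RtoC; simpl. f_equal; ring. }
  assert (HQ1 : Cmod (Cminus (RtoC 1) (Cmult (Cconj p) w)) ^ 2 = (1 + s * r) ^ 2).
  { rewrite Hpw. replace (Cminus (RtoC 1) (RtoC (- (s * r)))) with (RtoC (1 + s * r))
      by (unfold Cminus, Cplus, Copp, RtoC; simpl; f_equal; ring).
    rewrite Cmod_R, <- Rsqr_pow2, <- Rsqr_abs, Rsqr_pow2. reflexivity. }
  assert (HQ2 : Cmod (Cminus (RtoC 1) (Cmult (Cconj p) (Copp w))) ^ 2 = (1 - s * r) ^ 2).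
  { rewrite Hpu. replace (Cminus (RtoC 1) (RtoC (s * r))) with (RtoC (1 - s * r))
      by (unfold Cminus, Cplus, Copp, RtoC; simpl; f_equal; ring).
    rewrite Cmod_R, <- Rsqr_pow2, <- Rsqr_abs, Rsqr_pow2. reflexivity. }
  assert (Hwm : Cmod (Copp w) < 1) by (rewrite Cmod_opp, Hw; lra).
  assert (HQM := id1 p (Copp w)). rewrite HQ2, Cmod_opp, Hw in HQM. fold s in HQM.
  assert (HV := alpha_sq p (Copp w) Hp Hwm). rewrite HQ2 in HV.
  rewrite HV, HQ1, Cmod_opp, Hw. fold s.
  set (M := Cmod (Cminus p (Copp w)) ^ 2) in *.
  assert (Hsr : 0 < s * r < 1) by (split; nra).
  replace M with ((1 - s * r) ^ 2 - (1 - s ^ 2) * (1 - r ^ 2)) by lra.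
  assert (H1s : 0 < 1 - s ^ 2) by nra. assert (H1r : 0 < 1 - r ^ 2) by nra.
  apply sqrt_ratio_le.
  - apply Rinv_0_lt_compat. lra.
  - apply Rinv_0_lt_compat. lra.
  - replace ((1 - r ^ 2 * s ^ 2) / ((1 + s * r) ^ 2 * (1 - r ^ 2)) / / (1 - r ^ 2))
      with ((1 - s * r) / (1 + s * r)) by (field; split; nra).
    replace (/ (1 - ((1 - s * r) ^ 2 - (1 - s ^ 2) * (1 - r ^ 2)) / (1 - s * r) ^ 2) / / (1 - r ^ 2))
      with ((1 - s * r) ^ 2 / (1 - s ^ 2)).
    2:{ field. repeat split; try nra. }
    apply Rge_le, Rminus_ge. apply Rle_ge.
    replace ((1 - s * r) ^ 2 / (1 - s ^ 2) - (1 - s * r) / (1 + s * r))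
      with ((1 - s * r) * (s ^ 2 * (1 - r ^ 2)) / ((1 - s ^ 2) * (1 + s * r))) by (field; split; nra).
    apply Rmult_le_pos. apply Rmult_le_pos; nra.
    apply Rlt_le, Rinv_0_lt_compat. nra.
Qed.


Lemma w_mod (p : C) (r : R) : p <> RtoC 0 -> 0 < r < 1 ->
  Cmod (Copp (Cmult (Cdiv p (RtoC (Cmod p))) (RtoC r))) = r.
Proof.
  intros Hp0 Hr. set (s := Cmod p).
  assert (Hs : 0 < s) by (apply Cmod_gt_0; exact Hp0).
  rewrite Cmod_opp, Cmod_mult, Cmod_div, !Cmod_R. fold s.
  rewrite !Rabs_pos_eq by lra. field. all: try (apply Rgt_not_eq; exact Hs).
  intros E. apply (f_equal fst) in E. simpl in E. apply (Rgt_not_eq _ _ Hs). exact E.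
Qed.

Theorem proposition2p3 (p : C) (hp0 : p <> RtoC 0) (hp : Cmod p < 1)
  (Cstar : (C -> C) -> (C -> C))
  (hCstar : is_H2_adjoint (compop (alpha p)) Cstar) :
  (forall r : R, 0 < r < 1 ->
     let w := Copp (Cmult (Cdiv p (RtoC (Cmod p))) (RtoC r)) in
     H2norm (compop (alpha p) (kernel w)) / H2norm (kernel w)
       <= H2norm (Cstar (kernel (Copp w))) / H2norm (kernel (Copp w))) /\
  (forall z : C, Cmod z < 1 ->
     H2norm (Cstar (kernel z)) / H2norm (kernel z)
       <= H2norm (compop (alpha p) (kernel (alpha p z)))
          / H2norm (kernel (alpha p z))).
Proof.
  split.
  - intros r Hr. pose proof (part1 p r hp0 hp Hr) as H. pose proof (w_mod p r hp0 Hr) as Hw.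
    cbv zeta in *.
    set (w := Copp (Cmult (Cdiv p (RtoC (Cmod p))) (RtoC r))) in *.
    assert (Hw1 : Cmod w < 1) by lra.
    assert (Hw2 : Cmod (Copp w) < 1) by (rewrite Cmod_opp; lra).
    rewrite (compop_norm p w hp Hw1), (kernel_norm w Hw1), (Cstar_kernel p Cstar hp hCstar _ Hw2),
      (kernel_norm _ (alpha_disc p _ hp Hw2)), (kernel_norm _ Hw2).
    exact H.
  - intros z Hz. assert (Hv := alpha_disc p z hp Hz).
    rewrite (Cstar_kernel p Cstar hp hCstar _ Hz), (kernel_norm _ Hv), (kernel_norm _ Hz),
      (compop_norm p _ hp Hv).
    apply part2; assumption.
Qed.
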